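(* Let $n\ge2$. The Lie algebra $(\mathfrak{sl}_{n+1}(\mathbb C),\mu_\infty)$, where \[\mu_\infty:=[\cdot,\cdot]\big|_{\mathfrak{sl}_n(\mathbb C)\wedge\mathfrak{sl}_n(\mathbb C)}+[\cdot,\cdot]\big|_{\mathfrak{sl}_n(\mathbb C)\wedge\mathfrak s}+\sqrt{\frac{n^2-2}{n(n+1)}}\,\mathrm{Pr}_{\mathbb CI}\circ[\cdot,\cdot]\big|_{\mathfrak s\wedge\mathfrak s},\] is a semi-direct product $\mathfrak{sl}_n(\mathbb C)\ltimes\mathfrak h_{2n+1}$, where $\mathfrak h_{2n+1}$ is the complex Heisenberg Lie algebra (realized as $(\mathbb CI\oplus\mathfrak s,\mu_\infty)$).
   Context: $[\cdot,\cdot]$ is the commutator on $\mathfrak{sl}_{n+1}(\mathbb C)=\mathfrak{sl}_n(\mathbb C)\oplus\mathbb CI\oplus\mathfrak s$, with $\mathfrak{sl}_n(\mathbb C)$ the upper-left $n\times n$ block, $I=\sqrt{\tfrac1{n(n+1)}}\operatorname{diag}(1,\dots,1,-n)$, $\mathfrak s=\operatorname{span}_{\mathbb C}\{e_{i(n+1)},e_{(n+1)i}\}_{i=1}^n$, and $\mathrm{Pr}_{\mathbb CI}$ the orthogonal projection onto $\mathbb CI$ with respect to $\langle X,Y\rangle=\operatorname{tr}(XY^* )$. The complex Heisenberg Lie algebra $\mathfrak h_{2n+1}$ has a basis $X_1,\dots,X_n,Y_1,\dots,Y_n,Z$ whose only nonzero brackets are $[X_i,Y_j]=\delta_{ij}Z$.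 *)

(* Defs.v *)
From HB Require Import structures.
From mathcomp Require Import all_boot all_order all_algebra.
From mathcomp Require Import reals complex.
Set Implicit Arguments. Unset Strict Implicit. Unset Printing Implicit Defensive.
Import Order.TTheory GRing.Theory Num.Theory.
Local Open Scope ring_scope.

Section Defs.
Variable C : numClosedFieldType.
Variable n : nat.

Notation M := 'M[C]_(n.+1).

Definition comm (A B : M) : M := A *m B - B *m A.

Definition hs (X Y : M) : C := \tr (X *m (map_mx Num.conj Y)^T).

Definition Imat : M :=
  sqrtC (1 / (n * n.+1)%:R) *:
    \matrix_(i, j) (if i == j then (if i == ord_max then - n%:R else 1) else 0).

Definition PrI (X : M) : M := (hs X Imat / hs Imat Imat) *: Imat.

Definition in_sl (A : M) : Prop := \tr A = 0.
Definition in_sln (A : M) : Prop :=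
  (forall i j : 'I_n.+1, (i == ord_max) || (j == ord_max) -> A i j = 0) /\ \tr A = 0.
(* s = span{e_{i,n+1}, e_{n+1,i}}, i <= n *)
Definition in_s (A : M) : Prop :=
  forall i j : 'I_n.+1, ~~ ((i == ord_max) (+) (j == ord_max)) -> A i j = 0.
Definition in_h (A : M) : Prop := exists (a : C) (S : M), in_s S /\ A = a *: Imat + S.

(* components w.r.t. the (orthogonal) decomposition sl_{n+1} = sl_n + C I + s *)
Definition sPart (A : M) : M :=
  \matrix_(i, j) (if (i == ord_max) (+) (j == ord_max) then A i j else 0).
Definition slnPart (A : M) : M := A - PrI A - sPart A.

Definition cinf : C := sqrtC ((n ^ 2 - 2)%N%:R / (n * n.+1)%N%:R).

(* mu_infinity, bilinear extension of the three restricted pieces *)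
Definition mu_inf (X Y : M) : M :=
  comm (slnPart X) (slnPart Y)
  + comm (slnPart X) (sPart Y) + comm (sPart X) (slnPart Y)
  + cinf *: PrI (comm (sPart X) (sPart Y)).

End Defs.

(* Main.v *)
Require Import Defs.
From HB Require Import structures.
From mathcomp Require Import all_boot all_order all_algebra.
From mathcomp Require Import reals complex.
From mathcomp Require Import ring zify.
Import Order.TTheory GRing.Theory Num.Theory.
Local Open Scope ring_scope.
Set Implicit Arguments. Unset Strict Implicit.

Local Notation wid k := (widen_ord (leqnSn _) k).

Definition cc (C : numClosedFieldType) (n : nat) : C := sqrtC (1 / (n * n.+1)%:R).
Definition kk (C : numClosedFieldType) (n : nat) (X : 'M[C]_(n.+1)) : C :=
  cc C n * (\tr X - n.+1%:R * X ord_max ord_max).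

Ltac mxring := apply/matrixP => ? ?; rewrite !mxE; ring.

Lemma wid_max n (k : 'I_n) : (wid k == ord_max) = false.
Proof. by rewrite -val_eqE /= ltn_eqF. Qed.

Lemma wid_eq n (k l : 'I_n) : (wid k == wid l) = (k == l).
Proof. by rewrite -!val_eqE. Qed.

Lemma cc_sq (C : numClosedFieldType) (n : nat) : (0 < n)%N -> cc C n ^+ 2 * (n * n.+1)%:R = 1.
Proof.
move=> n0; rewrite /cc sqrtCK mul1r mulVf // pnatr_eq0 -lt0n muln_gt0 n0 //.
Qed.

Lemma cc_neq0 (C : numClosedFieldType) (n : nat) : (0 < n)%N -> cc C n != 0.
Proof.
move=> n0; apply/negP => /eqP h; have := cc_sq C n0; rewrite h expr2 !mul0r.
by move/eqP; rewrite eq_sym oner_eq0.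
Qed.

Lemma cc_conj (C : numClosedFieldType) (n : nat) : (cc C n)^* = cc C n.
Proof.
apply: conj_Creal; apply: ger0_real; rewrite /cc sqrtC_ge0.
by rewrite divr_ge0 ?ler01 ?ler0n.
Qed.

Lemma Imat_entry (C : numClosedFieldType) (n : nat) i j : Imat C n i j =
  cc C n * (if i == j then (if i == ord_max then - n%:R else 1) else 0).
Proof. by rewrite !mxE. Qed.

Lemma trI (C : numClosedFieldType) (n : nat) : \tr (Imat C n) = 0.
Proof.
rewrite /mxtrace big_ord_recr /=.
under eq_bigr => i _ do rewrite Imat_entry eqxx wid_max mulr1.
rewrite Imat_entry !eqxx sumr_const card_ord. ring.
Qed.

Lemma hsI (C : numClosedFieldType) (n : nat) (X : 'M[C]_(n.+1)) : hs X (Imat C n) = kk X.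
Proof.
rewrite /hs /kk /mxtrace.
have E : forall i, (X *m (map_mx Num.conj (Imat C n))^T) i i
    = X i i * (cc C n * (if i == ord_max then - n%:R else 1)).
  move=> i; rewrite mxE (bigD1 i) //= big1 ?addr0.
    rewrite !mxE eqxx rmorphM /= cc_conj; congr (_ * (_ * _)).
    by case: (i == ord_max); rewrite ?rmorphN ?rmorph_nat ?rmorph1.
  move=> j /negbTE ji; rewrite !mxE eq_sym ji.
  by rewrite mulr0 rmorph0 mulr0.
under eq_bigr => i _ do rewrite E.
rewrite big_ord_recr /= [X in _ = _ * (X - _)]big_ord_recr /=.
under eq_bigr => i _ do rewrite wid_max mulr1.
rewrite eqxx -mulr_suml -natr1; ring.
Qed.

Lemma kkI (C : numClosedFieldType) (n : nat) : (0 < n)%N -> kk (Imat C n) = 1.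
Proof.
move=> n0; rewrite /kk trI Imat_entry !eqxx -[RHS](cc_sq C n0) natrM -natr1.
ring.
Qed.

Lemma PrIE (C : numClosedFieldType) (n : nat) (X : 'M[C]_(n.+1)) :
  (0 < n)%N -> PrI X = kk X *: Imat C n.
Proof. by move=> n0; rewrite /PrI !hsI kkI // divr1. Qed.

Lemma kk_lin (C : numClosedFieldType) (n : nat) (a : C) (X Y : 'M[C]_(n.+1)) :
  kk (a *: X + Y) = a * kk X + kk Y.
Proof. rewrite /kk mxtraceD mxtraceZ !mxE; ring. Qed.

Lemma kk0 (C : numClosedFieldType) (n : nat) : kk (0 : 'M[C]_(n.+1)) = 0.
Proof. rewrite /kk mxtrace0 mxE; ring. Qed.

Lemma PrI_lin (C : numClosedFieldType) (n : nat) (a : C) (X Y : 'M[C]_(n.+1)) :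
  (0 < n)%N -> PrI (a *: X + Y) = a *: PrI X + PrI Y.
Proof. by move=> n0; rewrite !PrIE // kk_lin scalerDl scalerA. Qed.

Lemma PrID (C : numClosedFieldType) (n : nat) (X Y : 'M[C]_(n.+1)) :
  (0 < n)%N -> PrI (X + Y) = PrI X + PrI Y.
Proof. by move=> n0; rewrite -[X]scale1r PrI_lin // !scale1r. Qed.

Lemma PrI0 (C : numClosedFieldType) (n : nat) :
  (0 < n)%N -> PrI (0 : 'M[C]_(n.+1)) = 0.
Proof. by move=> n0; rewrite PrIE // kk0 scale0r. Qed.

Lemma sPart_lin (C : numClosedFieldType) (n : nat) (a : C) (X Y : 'M[C]_(n.+1)) :
  sPart (a *: X + Y) = a *: sPart X + sPart Y.
Proof. apply/matrixP => i j; rewrite !mxE; case: ifP => _; ring. Qed.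

Lemma slnPart_lin (C : numClosedFieldType) (n : nat) (a : C) (X Y : 'M[C]_(n.+1)) :
  (0 < n)%N -> slnPart (a *: X + Y) = a *: slnPart X + slnPart Y.
Proof.
move=> n0; rewrite /slnPart PrI_lin // sPart_lin.
move: (PrI X) (PrI Y) (sPart X) (sPart Y) => P Q S T; mxring.
Qed.

Lemma comm_linl (C : numClosedFieldType) (n : nat) (a : C) (X Y Z : 'M[C]_(n.+1)) :
  comm (a *: X + Y) Z = a *: comm X Z + comm Y Z.
Proof.
rewrite /comm mulmxDl mulmxDr -scalemxAl -scalemxAr.
move: (X *m Z) (Z *m X) (Y *m Z) (Z *m Y) => P Q S T; mxring.
Qed.

Lemma commDr (C : numClosedFieldType) (n : nat) (X Y Z : 'M[C]_(n.+1)) :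
  comm X (Y + Z) = comm X Y + comm X Z.
Proof.
rewrite /comm mulmxDl mulmxDr.
move: (X *m Y) (Y *m X) (X *m Z) (Z *m X) => P Q S T; mxring.
Qed.

Lemma comm0l (C : numClosedFieldType) (n : nat) (X : 'M[C]_(n.+1)) : comm 0 X = 0.
Proof. by rewrite /comm mul0mx mulmx0 subrr. Qed.

Lemma comm0r (C : numClosedFieldType) (n : nat) (X : 'M[C]_(n.+1)) : comm X 0 = 0.
Proof. by rewrite /comm mul0mx mulmx0 subrr. Qed.

Lemma commXX (C : numClosedFieldType) (n : nat) (X : 'M[C]_(n.+1)) : comm X X = 0.
Proof. by rewrite /comm subrr. Qed.

Lemma commC (C : numClosedFieldType) (n : nat) (X Y : 'M[C]_(n.+1)) : comm X Y = - comm Y X.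
Proof. by rewrite /comm opprB. Qed.

Lemma comm_jacobi (C : numClosedFieldType) (n : nat) (X Y Z : 'M[C]_(n.+1)) :
  comm X (comm Y Z) + comm Y (comm Z X) + comm Z (comm X Y) = 0.
Proof.
rewrite /comm !mulmxBr !mulmxBl !mulmxA.
move: (X *m Y *m Z) (X *m Z *m Y) (Y *m X *m Z) (Y *m Z *m X) (Z *m X *m Y) (Z *m Y *m X).
move=> a b c d e f; mxring.
Qed.

Lemma tr_comm (C : numClosedFieldType) (n : nat) (X Y : 'M[C]_(n.+1)) : \tr (comm X Y) = 0.
Proof. by rewrite /comm raddfB /= mxtrace_mulC subrr. Qed.

Lemma sPart_sln (C : numClosedFieldType) (n : nat) (A : 'M[C]_(n.+1)) :
  in_sln A -> sPart A = 0.
Proof.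
case=> hA _; apply/matrixP => i j; rewrite !mxE; case: ifP => // h.
by apply: hA; move: h; case: (i == ord_max); case: (j == ord_max).
Qed.

Lemma sPart_s (C : numClosedFieldType) (n : nat) (S : 'M[C]_(n.+1)) :
  in_s S -> sPart S = S.
Proof.
move=> hS; apply/matrixP => i j; rewrite !mxE; case: ifP => // h.
by rewrite hS // h.
Qed.

Lemma sPart_I (C : numClosedFieldType) (n : nat) : sPart (Imat C n) = 0.
Proof.
apply/matrixP => i j; rewrite !mxE; case: ifP => // h.
case: eqP => [ij|]; last by rewrite mulr0.
by move: h; rewrite ij addbb.
Qed.

Lemma s_sPart (C : numClosedFieldType) (n : nat) (X : 'M[C]_(n.+1)) : in_s (sPart X).
Proof. by move=> i j; rewrite mxE => /negbTE ->. Qed.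

Lemma s_lin (C : numClosedFieldType) (n : nat) (a : C) (X Y : 'M[C]_(n.+1)) :
  in_s X -> in_s Y -> in_s (a *: X + Y).
Proof. by move=> hX hY i j h; rewrite !mxE hX // hY // mulr0 addr0. Qed.

Lemma s0 (C : numClosedFieldType) (n : nat) : in_s (0 : 'M[C]_(n.+1)).
Proof. by move=> i j; rewrite mxE. Qed.

Lemma kk_sln (C : numClosedFieldType) (n : nat) (A : 'M[C]_(n.+1)) :
  in_sln A -> kk A = 0.
Proof. by case=> hA htr; rewrite /kk htr hA ?eqxx // mulr0 subrr mulr0. Qed.

Lemma tr_s (C : numClosedFieldType) (n : nat) (S : 'M[C]_(n.+1)) :
  in_s S -> \tr S = 0.
Proof. by move=> hS; rewrite /mxtrace big1 // => i _; rewrite hS ?addbb. Qed.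

Lemma kk_s (C : numClosedFieldType) (n : nat) (S : 'M[C]_(n.+1)) :
  in_s S -> kk S = 0.
Proof. by move=> hS; rewrite /kk tr_s // hS ?addbb // mulr0 subrr mulr0. Qed.

Lemma kk_comm_sln (C : numClosedFieldType) (n : nat) (A W : 'M[C]_(n.+1)) :
  in_sln A -> kk (comm A W) = 0.
Proof.
case=> hA _; rewrite /kk tr_comm /comm !mxE !big1 ?subrr ?mulr0 ?sub0r ?oppr0 ?mulr0 //.
  by move=> k _; rewrite hA ?mulr0 // eqxx orbT.
by move=> k _; rewrite hA ?mul0r // eqxx.
Qed.

Lemma sln_slnPart (C : numClosedFieldType) (n : nat) (X : 'M[C]_(n.+1)) :
  (0 < n)%N -> in_sl X -> in_sln (slnPart X).
Proof.
move=> n0 hX; split; last first.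
  rewrite /slnPart !raddfB /= (tr_s (s_sPart X)) PrIE // mxtraceZ trI hX mulr0 !subr0 //.
move=> i j h; rewrite /slnPart PrIE // !mxE /kk hX -/(cc C n) -natr1.
case Ei: (i == ord_max); case Ej: (j == ord_max); rewrite ?Ei ?Ej /= in h * => //.
- move/eqP: Ei => ->; move/eqP: Ej => ->; rewrite !eqxx /=.
  have h2 := cc_sq C n0; rewrite natrM -natr1 in h2.
  transitivity (X ord_max ord_max * (1 - cc C n ^+ 2 * (n%:R * (n%:R + 1)))).
    ring.
  by rewrite h2 subrr mulr0.
- have -> : (i == j) = false by apply/negbTE; apply: contraFN Ej => /eqP <-.
  ring.
- have -> : (i == j) = false by apply/negbTE; apply: contraFN Ei => /eqP ->.
  ring.
Qed.

Ltac ent hA hS Ei Ej Ek :=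
  first [ rewrite hA ?mul0r ?mulr0 //; by rewrite ?Ei ?Ej ?Ek ?orbT
        | rewrite hS ?mul0r ?mulr0 //; by rewrite ?Ei ?Ej ?Ek ].

Lemma sln_comm (C : numClosedFieldType) (n : nat) (A B : 'M[C]_(n.+1)) :
  in_sln A -> in_sln B -> in_sln (comm A B).
Proof.
case=> hA _ [hB _]; split; last exact: tr_comm.
move=> i j h; rewrite /comm !mxE !big1 ?subrr // => k _.
  case/orP: h => /eqP ->; first by rewrite hB ?mul0r // eqxx.
  by rewrite hA ?mulr0 // eqxx orbT.
case/orP: h => /eqP ->; first by rewrite hA ?mul0r // eqxx.
by rewrite hB ?mulr0 // eqxx orbT.
Qed.

Lemma s_comm (C : numClosedFieldType) (n : nat) (A S : 'M[C]_(n.+1)) :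
  in_sln A -> in_s S -> in_s (comm A S).
Proof.
case=> hA _ hS i j h; rewrite /comm !mxE !big1 ?subrr // => k _.
all: case Ei: (i == ord_max); case Ej: (j == ord_max); case Ek: (k == ord_max);
  rewrite ?Ei ?Ej /= in h; try done.
all: ent hA hS Ei Ej Ek.
Qed.

Lemma s_commr (C : numClosedFieldType) (n : nat) (A S : 'M[C]_(n.+1)) :
  in_sln A -> in_s S -> in_s (comm S A).
Proof.
move=> hA hS; rewrite commC -scaleN1r -[_ *: _]addr0.
by apply: s_lin; [exact: s_comm | exact: s0].
Qed.

Lemma kkD (C : numClosedFieldType) (n : nat) (X Y : 'M[C]_(n.+1)) : kk (X + Y) = kk X + kk Y.
Proof. by rewrite -[X in LHS]scale1r kk_lin mul1r. Qed.
Lemma kkZ (C : numClosedFieldType) (n : nat) a (X : 'M[C]_(n.+1)) : kk (a *: X) = a * kk X.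
Proof. by rewrite -[_ *: _]addr0 kk_lin kk0 addr0. Qed.
Lemma sPartD (C : numClosedFieldType) (n : nat) (X Y : 'M[C]_(n.+1)) : sPart (X + Y) = sPart X + sPart Y.
Proof. by rewrite -[X in LHS]scale1r sPart_lin scale1r. Qed.
Lemma sPartZ (C : numClosedFieldType) (n : nat) a (X : 'M[C]_(n.+1)) : sPart (a *: X) = a *: sPart X.
Proof.
rewrite -[_ *: _]addr0 sPart_lin.
have -> : sPart (0 : 'M[C]_(n.+1)) = 0.
  by apply/matrixP => i j; rewrite !mxE; case: ifP.
by rewrite addr0.
Qed.

Lemma parts (C : numClosedFieldType) (n : nat) (A S : 'M[C]_(n.+1)) a :
  (0 < n)%N -> in_sln A -> in_s S ->
  [/\ slnPart (A + a *: Imat C n + S) = A, sPart (A + a *: Imat C n + S) = S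
    & PrI (A + a *: Imat C n + S) = a *: Imat C n].
Proof.
move=> n0 hA hS.
have hP : PrI (A + a *: Imat C n + S) = a *: Imat C n.
  by rewrite PrIE // !kkD kkZ kkI // kk_sln // kk_s // add0r addr0 mulr1.
have hSp : sPart (A + a *: Imat C n + S) = S.
  by rewrite !sPartD sPartZ sPart_I sPart_sln // sPart_s // scaler0 !add0r.
split => //; rewrite /slnPart hP hSp.
move: (Imat C n) => I; mxring.
Qed.

Lemma rearr1 (C : numClosedFieldType) (n : nat) (P Q R T : 'M[C]_(n.+1)) :
  P + Q + R + T = P + T + (Q + R).
Proof. mxring. Qed.

Lemma muE (C : numClosedFieldType) (n : nat) (X Y : 'M[C]_(n.+1)) : (0 < n)%N ->
  mu_inf X Y = comm (slnPart X) (slnPart Y)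
    + (cinf C n * kk (comm (sPart X) (sPart Y))) *: Imat C n
    + (comm (slnPart X) (sPart Y) + comm (sPart X) (slnPart Y)).
Proof. by move=> n0; rewrite /mu_inf PrIE // scalerA rearr1. Qed.

Lemma mu_parts (C : numClosedFieldType) (n : nat) (Y Z : 'M[C]_(n.+1)) :
  (0 < n)%N -> in_sl Y -> in_sl Z ->
  slnPart (mu_inf Y Z) = comm (slnPart Y) (slnPart Z) /\
  sPart (mu_inf Y Z) = comm (slnPart Y) (sPart Z) + comm (sPart Y) (slnPart Z).
Proof.
move=> n0 hY hZ; have hy := sln_slnPart n0 hY; have hz := sln_slnPart n0 hZ.
have [] := @parts C n (comm (slnPart Y) (slnPart Z))
   (comm (slnPart Y) (sPart Z) + comm (sPart Y) (slnPart Z))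
   (cinf C n * kk (comm (sPart Y) (sPart Z))) n0.
- exact: sln_comm.
- rewrite -[comm (slnPart Y) (sPart Z)]scale1r; apply: s_lin; first exact: s_comm (s_sPart _).
  exact: s_commr (s_sPart _).
by rewrite -muE // => -> -> _.
Qed.

Lemma PrI_jac (C : numClosedFieldType) (n : nat) (A S1 S2 : 'M[C]_(n.+1)) :
  (0 < n)%N -> in_sln A ->
  PrI (comm S1 (comm S2 A)) + PrI (comm S2 (comm A S1)) = 0.
Proof.
move=> n0 hA; have h0 : PrI (comm A (comm S1 S2)) = 0.
  by rewrite PrIE // kk_comm_sln // scale0r.
have := congr1 (@PrI C n) (comm_jacobi A S1 S2).
move: (comm A (comm S1 S2)) h0 (comm S1 (comm S2 A)) (comm S2 (comm A S1)).
move=> t1 h0 t2 t3.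
by rewrite !PrID // PrI0 // h0 add0r.
Qed.

Lemma mu_jacobi (C : numClosedFieldType) (n : nat) (X Y Z : 'M[C]_(n.+1)) :
  (0 < n)%N -> in_sl X -> in_sl Y -> in_sl Z ->
  mu_inf X (mu_inf Y Z) + mu_inf Y (mu_inf Z X) + mu_inf Z (mu_inf X Y) = 0.
Proof.
move=> n0 hX hY hZ.
have [p1 q1] := mu_parts n0 hY hZ.
have [p2 q2] := mu_parts n0 hZ hX.
have [p3 q3] := mu_parts n0 hX hY.
have E : forall U V : 'M[C]_(n.+1), mu_inf U V = comm (slnPart U) (slnPart V)
  + comm (slnPart U) (sPart V) + comm (sPart U) (slnPart V)
  + cinf C n *: PrI (comm (sPart U) (sPart V)) by [].
rewrite (E X (mu_inf Y Z)) (E Y (mu_inf Z X)) (E Z (mu_inf X Y)) p1 q1 p2 q2 p3 q3.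
have hx := sln_slnPart n0 hX; have hy := sln_slnPart n0 hY; have hz := sln_slnPart n0 hZ.
move: (slnPart X) (slnPart Y) (slnPart Z) hx hy hz => ax ay az hx hy hz.
move: (sPart X) (sPart Y) (sPart Z) => sx sy sz.
rewrite (commDr ax (comm ay sz)) (commDr ay (comm az sx)) (commDr az (comm ax sy)).
rewrite (commDr sx (comm ay sz)) (commDr sy (comm az sx)) (commDr sz (comm ax sy)).
rewrite (PrID (comm sx (comm ay sz))) // (PrID (comm sy (comm az sx))) //.
rewrite (PrID (comm sz (comm ax sy))) //.
have K1 := PrI_jac sy sz n0 hx.
have K2 := PrI_jac sz sx n0 hy.
have K3 := PrI_jac sx sy n0 hz.
have J1 := comm_jacobi ax ay az.
have J2 := comm_jacobi ax ay sz.
have J3 := comm_jacobi ay az sx.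
have J4 := comm_jacobi az ax sy.
transitivity (
  (comm ax (comm ay az) + comm ay (comm az ax) + comm az (comm ax ay)) +
  (comm ax (comm ay sz) + comm ay (comm sz ax) + comm sz (comm ax ay)) +
  (comm ay (comm az sx) + comm az (comm sx ay) + comm sx (comm ay az)) +
  (comm az (comm ax sy) + comm ax (comm sy az) + comm sy (comm az ax)) +
  cinf C n *: ((PrI (comm sy (comm sz ax)) + PrI (comm sz (comm ax sy))) +
               (PrI (comm sz (comm sx ay)) + PrI (comm sx (comm ay sz))) +
               (PrI (comm sx (comm sy az)) + PrI (comm sy (comm az sx))))); last first.
  by rewrite J1 J2 J3 J4 K1 K2 K3 !addr0 scaler0 addr0.
clear.
move: (@comm C n) (@PrI C n) => cm P.
mxring.
Qed.

Lemma mu_sl (C : numClosedFieldType) (n : nat) (X Y : 'M[C]_(n.+1)) :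
  (0 < n)%N -> in_sl (mu_inf X Y).
Proof.
move=> n0; rewrite /in_sl /mu_inf 3!mxtraceD !tr_comm PrIE // 2!mxtraceZ trI.
by rewrite !mulr0 !addr0.
Qed.

Lemma mu_lin (C : numClosedFieldType) (n : nat) a (X Y Z : 'M[C]_(n.+1)) :
  (0 < n)%N -> mu_inf (a *: X + Y) Z = a *: mu_inf X Z + mu_inf Y Z.
Proof.
move=> n0; rewrite /mu_inf slnPart_lin // sPart_lin !comm_linl PrI_lin //.
move: (@comm C n) (@PrI C n) => cm P; mxring.
Qed.

Lemma mu_XX (C : numClosedFieldType) (n : nat) (X : 'M[C]_(n.+1)) :
  (0 < n)%N -> mu_inf X X = 0.
Proof.
move=> n0; rewrite /mu_inf !commXX PrI0 // scaler0 [comm (sPart X) _]commC.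
by rewrite add0r addrN add0r.
Qed.

Lemma sln0 (C : numClosedFieldType) (n : nat) : in_sln (0 : 'M[C]_(n.+1)).
Proof. by split; [move=> i j _; rewrite mxE | rewrite mxtrace0]. Qed.

Lemma slnPart_sln (C : numClosedFieldType) (n : nat) (A : 'M[C]_(n.+1)) :
  (0 < n)%N -> in_sln A -> slnPart A = A.
Proof.
by move=> n0 hA; rewrite /slnPart PrIE // kk_sln // sPart_sln // scale0r !subr0.
Qed.

Lemma parts_h (C : numClosedFieldType) (n : nat) (S : 'M[C]_(n.+1)) a :
  (0 < n)%N -> in_s S ->
  slnPart (a *: Imat C n + S) = 0 /\ sPart (a *: Imat C n + S) = S.
Proof.
move=> n0 hS; have [] := @parts C n 0 S a n0 (@sln0 C n) hS.
by rewrite add0r => -> -> _.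
Qed.

Lemma decomp_ex (C : numClosedFieldType) (n : nat) (X : 'M[C]_(n.+1)) :
  (0 < n)%N -> in_sl X ->
  exists A H, [/\ in_sln A, in_h H & X = A + H].
Proof.
move=> n0 hX; exists (slnPart X), (PrI X + sPart X); split.
- exact: sln_slnPart.
- by exists (kk X), (sPart X); split; [exact: s_sPart | rewrite PrIE].
- rewrite /slnPart; move: (PrI X) (sPart X) => P Q; mxring.
Qed.

Lemma sln_h0 (C : numClosedFieldType) (n : nat) (X : 'M[C]_(n.+1)) :
  (0 < n)%N -> in_sln X -> in_h X -> X = 0.
Proof.
move=> n0 [hX htr] [a [S [hS eX]]]; subst X.
have ha : a = 0.
  have := hX ord_max ord_max; rewrite eqxx => /(_ isT).
  rewrite !mxE !eqxx hS ?addbb // addr0 => /eqP.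
  rewrite !mulf_eq0 oppr_eq0 pnatr_eq0 (negbTE (cc_neq0 C n0)) /=.
  by rewrite eqn0Ngt n0 orbF => /eqP.
move: hX; rewrite ha scale0r add0r => hX.
apply/matrixP => i j; rewrite mxE.
case E: ((i == ord_max) || (j == ord_max)); first exact: hX.
by apply: hS; move: E; case: (i == ord_max); case: (j == ord_max).
Qed.

Lemma h_sl (C : numClosedFieldType) (n : nat) (X : 'M[C]_(n.+1)) : in_h X -> in_sl X.
Proof.
case=> a [S [hS ->]]; rewrite /in_sl mxtraceD (tr_s hS).
by rewrite [\tr (_ *: Imat C n)]mxtraceZ trI mulr0 addr0.
Qed.

Lemma sln_sub (C : numClosedFieldType) (n : nat) (X Y : 'M[C]_(n.+1)) :
  (0 < n)%N -> in_sln X -> in_sln Y -> mu_inf X Y = comm X Y /\ in_sln (mu_inf X Y).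
Proof.
move=> n0 hX hY.
have E : mu_inf X Y = comm X Y.
  rewrite /mu_inf !slnPart_sln // !sPart_sln // !comm0r comm0l PrI0 //.
  by rewrite scaler0 !addr0.
by rewrite E; split => //; apply: sln_comm.
Qed.

Lemma ideal (C : numClosedFieldType) (n : nat) (X Y : 'M[C]_(n.+1)) :
  (0 < n)%N -> in_sl X -> in_h Y -> in_h (mu_inf X Y).
Proof.
move=> n0 hX [a [S [hS ->]]]; rewrite /mu_inf.
have [-> ->] := parts_h a n0 hS.
rewrite !comm0r !addr0 add0r PrIE // scalerA.
exists (cinf C n * kk (comm (sPart X) S)), (comm (slnPart X) S); split.
  by apply: s_comm => //; exact: sln_slnPart.
by rewrite addrC.
Qed.

Lemma tr_delta (C : numClosedFieldType) (n : nat) (i j : 'I_n.+1) :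
  \tr (delta_mx i j : 'M[C]_(n.+1)) = (i == j)%:R.
Proof.
rewrite /mxtrace (bigD1 i) //= mxE eqxx /= eq_sym big1 ?addr0 // => k ki.
by rewrite mxE (negbTE ki).
Qed.

Lemma parts_s (C : numClosedFieldType) (n : nat) (S : 'M[C]_(n.+1)) :
  (0 < n)%N -> in_s S -> slnPart S = 0 /\ sPart S = S.
Proof. by move=> n0 hS; have := parts_h 0 n0 hS; rewrite scale0r add0r. Qed.

Lemma parts_I (C : numClosedFieldType) (n : nat) a :
  (0 < n)%N -> slnPart (a *: Imat C n) = 0 /\ sPart (a *: Imat C n) = 0.
Proof. by move=> n0; have := parts_h a n0 (@s0 C n); rewrite addr0. Qed.

Lemma mu_ss (C : numClosedFieldType) (n : nat) (X Y : 'M[C]_(n.+1)) :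
  (0 < n)%N -> in_s X -> in_s Y -> mu_inf X Y = cinf C n *: PrI (comm X Y).
Proof.
move=> n0 hX hY; have [h1 h2] := parts_s n0 hX; have [h3 h4] := parts_s n0 hY.
by rewrite /mu_inf h1 h2 h3 h4 !comm0l comm0r !add0r.
Qed.

Lemma mu_I (C : numClosedFieldType) (n : nat) (X : 'M[C]_(n.+1)) a :
  (0 < n)%N -> in_s X -> mu_inf X (a *: Imat C n) = 0.
Proof.
move=> n0 hX; have [h1 h2] := parts_s n0 hX; have [h3 h4] := parts_I a n0.
by rewrite /mu_inf h1 h2 h3 h4 !comm0l comm0r PrI0 // scaler0 !addr0.
Qed.

Lemma s_X (C : numClosedFieldType) (n : nat) (k : 'I_n) :
  in_s (delta_mx (wid k) ord_max : 'M[C]_(n.+1)).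
Proof.
move=> i j h; rewrite mxE; apply/eqP; rewrite pnatr_eq0 eqb0.
by apply: contra h => /andP[/eqP e1 /eqP e2]; subst; rewrite wid_max eqxx.
Qed.

Lemma s_Y (C : numClosedFieldType) (n : nat) (k : 'I_n) :
  in_s (delta_mx ord_max (wid k) : 'M[C]_(n.+1)).
Proof.
move=> i j h; rewrite mxE; apply/eqP; rewrite pnatr_eq0 eqb0.
by apply: contra h => /andP[/eqP e1 /eqP e2]; subst; rewrite wid_max eqxx.
Qed.

Lemma ordS n (i : 'I_n.+1) : i = ord_max \/ exists k : 'I_n, i = wid k.
Proof.
have := ltn_ord i; rewrite ltnS leq_eqVlt => /orP [/eqP e | lt].
  by left; apply: val_inj.
by right; exists (Ordinal lt); apply: val_inj.
Qed.


Lemma sum_delta (C : numClosedFieldType) (n : nat) (a : 'I_n -> C) k :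
  \sum_l a l * ((l == k))%:R = a k.
Proof.
rewrite (bigD1 k) //= eqxx mulr1 big1 ?addr0 // => l /negbTE ->.
by rewrite mulr0.
Qed.

Ltac simpd := rewrite !mxE ?wid_max ?[ord_max == _]eq_sym ?wid_max ?andbF ?mulr0.

Definition sX (C : numClosedFieldType) (n : nat) (a : 'I_n -> C) : 'M[C]_(n.+1) :=
  \sum_k a k *: delta_mx (wid k) ord_max.
Definition sY (C : numClosedFieldType) (n : nat) (a : 'I_n -> C) : 'M[C]_(n.+1) :=
  \sum_k a k *: delta_mx ord_max (wid k).

Lemma sX_wm (C : numClosedFieldType) (n : nat) (a : 'I_n -> C) k :
  sX a (wid k) ord_max = a k.
Proof.
rewrite /sX summxE -[RHS](sum_delta a k); apply: eq_bigr => l _.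
by rewrite !mxE wid_eq eqxx andbT eq_sym.
Qed.

Lemma sX_mj (C : numClosedFieldType) (n : nat) (a : 'I_n -> C) j :
  sX a ord_max j = 0.
Proof. by rewrite /sX summxE big1 // => l _; simpd. Qed.

Lemma sX_iw (C : numClosedFieldType) (n : nat) (a : 'I_n -> C) i l :
  sX a i (wid l) = 0.
Proof.
by rewrite /sX summxE big1 // => k _; simpd.
Qed.

Lemma sY_mw (C : numClosedFieldType) (n : nat) (a : 'I_n -> C) k :
  sY a ord_max (wid k) = a k.
Proof.
rewrite /sY summxE -[RHS](sum_delta a k); apply: eq_bigr => l _.
by rewrite !mxE wid_eq eqxx eq_sym.
Qed.

Lemma sY_im (C : numClosedFieldType) (n : nat) (a : 'I_n -> C) i :
  sY a i ord_max = 0.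
Proof. by rewrite /sY summxE big1 // => l _; simpd. Qed.

Lemma sY_wj (C : numClosedFieldType) (n : nat) (a : 'I_n -> C) l j :
  sY a (wid l) j = 0.
Proof.
by rewrite /sY summxE big1 // => k _; simpd.
Qed.

Lemma cinf_neq0 (C : numClosedFieldType) (n : nat) : (1 < n)%N -> cinf C n != 0.
Proof.
move=> n2; rewrite /cinf sqrtC_eq0 mulf_eq0 invr_eq0 !pnatr_eq0 negb_or.
by apply/andP; split; apply/eqP; nia.
Qed.

Definition zz (C : numClosedFieldType) (n : nat) : C := cinf C n * cc C n * n.+1%:R.

Lemma zz_neq0 (C : numClosedFieldType) (n : nat) : (1 < n)%N -> zz C n != 0.
Proof.
move=> n2; have n0 : (0 < n)%N by apply: leq_trans n2.
by rewrite /zz !mulf_neq0 ?cinf_neq0 ?cc_neq0 ?pnatr_eq0.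
Qed.

Lemma in_s_decomp (C : numClosedFieldType) (n : nat) (S : 'M[C]_(n.+1)) :
  in_s S -> S = sX (fun k => S (wid k) ord_max) + sY (fun k => S ord_max (wid k)).
Proof.
move=> hS; apply/matrixP => i j; rewrite mxE.
case: (ordS i) => [->|[k ->]]; case: (ordS j) => [->|[l ->]].
- by rewrite sX_mj sY_im addr0 hS // eqxx.
- by rewrite sX_mj (sY_mw (fun k => S ord_max (wid k)) l) add0r.
- by rewrite (sX_wm (fun k => S (wid k) ord_max) k) sY_im addr0.
- by rewrite sX_iw sY_wj addr0 hS // !wid_max.
Qed.

Lemma heis (C : numClosedFieldType) (n : nat) : (1 < n)%N ->
      exists (Xs Ys : 'I_n -> 'M[C]_(n.+1)) (Z : 'M[C]_(n.+1)),
      [/\ (forall k, in_h (Xs k) /\ in_h (Ys k)) /\ in_h Z,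
          (forall (a b : 'I_n -> C) (c : C),
              \sum_k a k *: Xs k + \sum_k b k *: Ys k + c *: Z = 0 ->
              (forall k, a k = 0 /\ b k = 0) /\ c = 0),
          (forall H, in_h H -> exists (a b : 'I_n -> C) (c : C),
              H = \sum_k a k *: Xs k + \sum_k b k *: Ys k + c *: Z),
          (forall k l, mu_inf (Xs k) (Ys l) = (k == l)%:R *: Z /\
                       mu_inf (Xs k) (Xs l) = 0 /\ mu_inf (Ys k) (Ys l) = 0)
        & (forall k, mu_inf (Xs k) Z = 0 /\ mu_inf (Ys k) Z = 0)].
Proof.
move=> n2; have n0 : (0 < n)%N by apply: leq_trans n2.
exists (fun k => delta_mx (wid k) ord_max), (fun k => delta_mx ord_max (wid k)),
  (zz C n *: Imat C n).
split.
- split; first by move=> k; split; [exists 0, (delta_mx (wid k) ord_max) |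
     exists 0, (delta_mx ord_max (wid k))]; rewrite scale0r add0r; split=> //;
     [exact: s_X | exact: s_Y].
  by exists (zz C n), 0; rewrite addr0; split=> //; exact: s0.
- move=> a b c; rewrite -/(sX a) -/(sY b) => hsum.
  have E i j := congr1 (fun M : 'M[C]_(n.+1) => M i j) hsum.
  have hc : c = 0.
    have := E ord_max ord_max; rewrite /= !mxE sX_mj sY_im !add0r !eqxx.
    move/eqP; rewrite -/(cc C n) !mulf_eq0 (negbTE (cinf_neq0 C n2)) (negbTE (cc_neq0 C n0)) oppr_eq0 !pnatr_eq0 /=.
    by rewrite -[n == 0%N]negbK -lt0n n0 orbF => /eqP.
  split=> // k; split.
    have := E (wid k) ord_max; rewrite /= !mxE sX_wm sY_im wid_max.
    by rewrite !mulr0 !addr0.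
  have := E ord_max (wid k); rewrite /= !mxE sX_mj sY_mw [ord_max == _]eq_sym wid_max.
  by rewrite !mulr0 !addr0 add0r.
- move=> H [a [S [hS ->]]].
  exists (fun k => S (wid k) ord_max), (fun k => S ord_max (wid k)), (a / zz C n).
  rewrite -/(sX _) -/(sY _) -in_s_decomp // scalerA divfK ?zz_neq0 //.
  by rewrite addrC.
- move=> k l; split; last split.
  + rewrite (mu_ss n0 (s_X C k) (s_Y C l)) /comm !mul_delta_mx_cond eqxx mulr1n wid_eq.
    case: (eqVneq k l) => [<-|kl].
      rewrite mulr1n PrIE // /kk raddfB /= !tr_delta !mxE !eqxx [ord_max == _]eq_sym wid_max /=.
      rewrite !scalerA; congr (_ *: _); rewrite /zz; ring.
    rewrite mulr0n subr0 PrIE // /kk tr_delta wid_eq (negbTE kl) !mxE.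
    rewrite [ord_max == _]eq_sym wid_max /= !scalerA; congr (_ *: _); rewrite /zz; ring.
  + rewrite (mu_ss n0 (s_X C k) (s_X C l)) /comm !mul_delta_mx_cond.
    by rewrite [ord_max == _]eq_sym wid_max [ord_max == _]eq_sym wid_max !mulr0n subrr PrI0 // scaler0.
  + rewrite (mu_ss n0 (s_Y C k) (s_Y C l)) /comm !mul_delta_mx_cond !wid_max.
    by rewrite !mulr0n subrr PrI0 // scaler0.
- by move=> k; rewrite (mu_I _ n0 (s_X C k)) (mu_I _ n0 (s_Y C k)).
Qed.

Unset Implicit Arguments. Set Strict Implicit.

Theorem lemma3p11 (R : realType) (n : nat) : (2 <= n)%N ->
  let mu := @mu_inf R[i] n in
  let sl := @in_sl R[i] n in
  let sln := @in_sln R[i] n in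
  let h := @in_h R[i] n in
  (* (sl_{n+1}(C), mu_inf) is a Lie algebra *)
  [/\ (forall X Y, sl X -> sl Y -> sl (mu X Y)),
      (forall (a : R[i]) X Y Z, sl X -> sl Y -> sl Z ->
          mu (a *: X + Y) Z = a *: mu X Z + mu Y Z),
      (forall X, sl X -> mu X X = 0),
      (forall X Y Z, sl X -> sl Y -> sl Z ->
          mu X (mu Y Z) + mu Y (mu Z X) + mu Z (mu X Y) = 0)
  & (* semidirect product sl_n(C) |x h, h = C I + s *)
  [/\ (* sl_{n+1} = sl_n (+) h as vector spaces *)
      (forall X, sl X -> exists A H, [/\ sln A, h H & X = A + H]) /\
      (forall X, sln X -> h X -> X = 0),
      (forall X, h X -> sl X),
      (* sl_n is a subalgebra carrying its usual bracket *)
      (forall X Y, sln X -> sln Y -> mu X Y = comm X Y /\ sln (mu X Y)),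
      (* h is an ideal *)
      (forall X Y, sl X -> h Y -> h (mu X Y))
    & (* (h, mu) is the Heisenberg Lie algebra h_{2n+1} *)
      exists (Xs Ys : 'I_n -> 'M[R[i]]_(n.+1)) (Z : 'M[R[i]]_(n.+1)),
      [/\ (forall k, h (Xs k) /\ h (Ys k)) /\ h Z,
          (* linear independence *)
          (forall (a b : 'I_n -> R[i]) (c : R[i]),
              \sum_k a k *: Xs k + \sum_k b k *: Ys k + c *: Z = 0 ->
              (forall k, a k = 0 /\ b k = 0) /\ c = 0),
          (* spanning *)
          (forall H, h H -> exists (a b : 'I_n -> R[i]) (c : R[i]),
              H = \sum_k a k *: Xs k + \sum_k b k *: Ys k + c *: Z),
          (* brackets *)
          (forall k l, mu (Xs k) (Ys l) = (k == l)%:R *: Z /\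
                       mu (Xs k) (Xs l) = 0 /\ mu (Ys k) (Ys l) = 0)
        & (forall k, mu (Xs k) Z = 0 /\ mu (Ys k) Z = 0)]]].
Proof.
move=> n2; have n0 : (0 < n)%N by apply: leq_trans n2.
cbv zeta; split.
- by move=> X Y _ _; apply: mu_sl.
- by move=> a X Y Z _ _ _; apply: mu_lin.
- by move=> X _; apply: mu_XX.
- by move=> X Y Z hX hY hZ; apply: mu_jacobi.
split.
- by split; [move=> X; exact: decomp_ex | move=> X; exact: sln_h0].
- by move=> X; exact: h_sl.
- by move=> X Y; exact: sln_sub.
- by move=> X Y; exact: ideal.
- exact: heis.
Qed.
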